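(* Let $\mathcal{S}=(\mathscr{X},\nabla_{\mathcal{S}})$ be a non-commutative spacetime, $\mathscr{Y}$ a quantale, and $f:\mathscr{X}\to\mathscr{Y}$ a join-preserving strict monoidal map which is an order embedding ($f(a)\le f(b)$ implies $a\le b$) and has a left adjoint $f_!:\mathscr{Y}\to\mathscr{X}$. Then there exists $\nabla:\mathscr{Y}\to\mathscr{Y}$ such that $\mathcal{T}=(\mathscr{Y},\nabla)$ is a non-commutative spacetime and $f:\mathcal{S}\to\mathcal{T}$ is a logical geometric map.
   Context: A monoidal poset is a poset with a monoid structure whose multiplication is monotone in each argument. A quantale is a monoidal poset with all joins whose multiplication distributes over arbitrary joins in each argument. A monotone map between monoidal posets is oplax monoidal if $f(e)\le e$ and $f(a\otimes b)\le f(a)\otimes f(b)$, strict monoidal if equalities hold. A non-commutative spacetime is a pair $(\mathscr{X},\nabla)$ with $\mathscr{X}$ a quantale and $\nabla$ a join-preserving oplax monoidal endomap. Its implication is $a\to_{\mathcal{S}}b=\Box(a\Rightarrow b)$, where $\Box$ is the right adjoint of $\nabla$ and $\Rightarrow$ the right adjoint of $a\otimes(-)$; equivalently $a\otimes\nabla b\le c$ iff $b\le a\to_{\mathcal{S}}c$. A geometric map $f:(\mathscr{X},\nabla_{\mathcal{S}})\to(\mathscr{Y},\nabla_{\mathcal{T}})$ is a join-preserving strict monoidal map with $f\nabla_{\mathcal{S}}=\nabla_{\mathcal{T}}f$; it is logical if moreover $f(a\to_{\mathcal{S}}b)=f(a)\to_{\mathcal{T}}f(b)$. *)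

(* Defs.v *)
Set Implicit Arguments.

Record Quantale := {
  carrier :> Type;
  qle : carrier -> carrier -> Prop;
  qjoin : (carrier -> Prop) -> carrier;
  qmul : carrier -> carrier -> carrier;
  qunit : carrier;
  qle_refl : forall a, qle a a;
  qle_trans : forall a b c, qle a b -> qle b c -> qle a c;
  qle_antisym : forall a b, qle a b -> qle b a -> a = b;
  qjoin_ub : forall (P : carrier -> Prop) a, P a -> qle a (qjoin P);
  qjoin_least : forall (P : carrier -> Prop) b,
      (forall a, P a -> qle a b) -> qle (qjoin P) b;
  qmulA : forall a b c, qmul a (qmul b c) = qmul (qmul a b) c;
  qmul1l : forall a, qmul qunit a = a;
  qmul1r : forall a, qmul a qunit = a;
  qmul_monol : forall a a' b, qle a a' -> qle (qmul a b) (qmul a' b);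
  qmul_monor : forall a b b', qle b b' -> qle (qmul a b) (qmul a b');
  qmul_joinl : forall (P : carrier -> Prop) b,
      qmul (qjoin P) b = qjoin (fun c => exists a, P a /\ c = qmul a b);
  qmul_joinr : forall a (P : carrier -> Prop),
      qmul a (qjoin P) = qjoin (fun c => exists b, P b /\ c = qmul a b)
}.

Arguments qle {q}.
Arguments qjoin {q}.
Arguments qmul {q}.
Arguments qunit {q}.

Definition image {X Y : Type} (f : X -> Y) (P : X -> Prop) : Y -> Prop :=
  fun y => exists x, P x /\ y = f x.

Definition monotone {X Y : Quantale} (f : X -> Y) : Prop :=
  forall a b, qle a b -> qle (f a) (f b).

Definition join_preserving {X Y : Quantale} (f : X -> Y) : Prop :=
  forall P : X -> Prop, f (qjoin P) = qjoin (image f P).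

Definition oplax_monoidal {X Y : Quantale} (f : X -> Y) : Prop :=
  monotone f /\ qle (f qunit) qunit /\
  forall a b, qle (f (qmul a b)) (qmul (f a) (f b)).

Definition strict_monoidal {X Y : Quantale} (f : X -> Y) : Prop :=
  monotone f /\ f qunit = qunit /\
  forall a b, f (qmul a b) = qmul (f a) (f b).

Definition is_spacetime {X : Quantale} (nabla : X -> X) : Prop :=
  join_preserving nabla /\ oplax_monoidal nabla.

(** Right adjoint Box of a join-preserving nabla: Box x = join {c | nabla c <= x}. *)
Definition box {X : Quantale} (nabla : X -> X) (x : X) : X :=
  qjoin (fun c => qle (nabla c) x).

(** Right adjoint of a ⊗ (-): (a ⇒ b) = join {c | a ⊗ c <= b}. *)
Definition qimp {X : Quantale} (a b : X) : X :=
  qjoin (fun c => qle (qmul a c) b).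

Definition st_imp {X : Quantale} (nabla : X -> X) (a b : X) : X :=
  box nabla (qimp a b).

Definition geometric_map {X Y : Quantale} (nS : X -> X) (nT : Y -> Y)
    (f : X -> Y) : Prop :=
  join_preserving f /\ strict_monoidal f /\ forall a, f (nS a) = nT (f a).

Definition logical_map {X Y : Quantale} (nS : X -> X) (nT : Y -> Y)
    (f : X -> Y) : Prop :=
  geometric_map nS nT f /\
  forall a b, f (st_imp nS a b) = st_imp nT (f a) (f b).

Definition order_embedding {X Y : Quantale} (f : X -> Y) : Prop :=
  forall a b, qle (f a) (f b) -> qle a b.

Definition left_adjoint {X Y : Quantale} (g : Y -> X) (f : X -> Y) : Prop :=
  forall y x, qle (g y) x <-> qle y (f x).

(* Main.v *)
Require Import Defs.

Lemma yon (X : Quantale) (a b : X) :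
  (forall y : X, qle y a <-> qle y b) -> a = b.
Proof.
  intro H. apply qle_antisym; [apply H; apply qle_refl | apply H; apply qle_refl].
Qed.

Lemma box_adj (X : Quantale) (n : X -> X) :
  join_preserving n -> monotone n -> forall c x, qle (n c) x <-> qle c (box n x).
Proof.
  intros Hj Hm c x; split; intro H.
  - apply qjoin_ub; exact H.
  - eapply qle_trans. apply Hm, H. unfold box; rewrite Hj.
    apply qjoin_least. intros y [z [Hz ->]]. exact Hz.
Qed.

Lemma imp_adj (X : Quantale) (a b c : X) :
  qle (qmul a c) b <-> qle c (qimp a b).
Proof.
  split; intro H.
  - apply qjoin_ub; exact H.
  - eapply qle_trans. apply qmul_monor, H. unfold qimp; rewrite qmul_joinr.
    apply qjoin_least. intros y [z [Hz ->]]. exact Hz.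
Qed.

Lemma join_ext (X : Quantale) (P Q : X -> Prop) :
  (forall a, P a <-> Q a) -> qjoin P = qjoin Q.
Proof.
  intro H. apply qle_antisym; apply qjoin_least; intros a Ha; apply qjoin_ub; apply H; auto.
Qed.

Theorem corollary5p13 (X Y : Quantale) (nablaS : X -> X) (f : X -> Y) :
  is_spacetime nablaS ->
  join_preserving f -> strict_monoidal f -> order_embedding f ->
  (exists f_shriek : Y -> X, left_adjoint f_shriek f) ->
  exists nabla : Y -> Y, is_spacetime nabla /\ logical_map nablaS nabla f.
Proof.
  intros [HSj [HSm [HSe HSt]]] Hfj [Hfm [Hfe Hft]] Hemb [g Hg].
  assert (unit : forall y, qle y (f (g y))) by (intro y; apply Hg, qle_refl).
  assert (counit : forall x, qle (g (f x)) x) by (intro x; apply Hg, qle_refl).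
  assert (Hgm : monotone g).
  { intros a b H. apply Hg. eapply qle_trans. exact H. apply unit. }
  assert (gf : forall x, g (f x) = x).
  { intro x. apply qle_antisym. apply counit. apply Hemb, unit. }
  assert (Hgj : join_preserving g).
  { intro P. apply qle_antisym.
    - apply Hg. apply qjoin_least. intros p Hp.
      eapply qle_trans. apply unit. apply Hfm. apply qjoin_ub. exists p; split; auto.
    - apply qjoin_least. intros y [p [Hp ->]]. apply Hgm. apply qjoin_ub; exact Hp. }
  set (nT := fun y => f (nablaS (g y))).
  assert (HTm : monotone nT).
  { intros a b H. unfold nT. apply Hfm, HSm, Hgm, H. }
  assert (HTj : join_preserving nT).
  { intro P. unfold nT. rewrite Hgj, HSj, Hfj.
    apply join_ext. intro y; split.
    - intros [a [[b [[c [Hc ->]] ->]] ->]]. exists c; auto.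
    - intros [c [Hc ->]]. exists (nablaS (g c)); split; auto.
      exists (g c); split; auto. exists c; auto. }
  assert (HTt : forall a b, qle (nT (qmul a b)) (qmul (nT a) (nT b))).
  { intros a b. unfold nT. rewrite <- Hft. apply Hfm.
    eapply qle_trans; [|apply HSt]. apply HSm. apply Hg.
    rewrite Hft. apply qle_trans with (qmul (f (g a)) b).
    apply qmul_monol, unit. apply qmul_monor, unit. }
  assert (HTe : qle (nT qunit) qunit).
  { unfold nT. rewrite <- Hfe. apply Hfm. eapply qle_trans; [|apply HSe].
    apply HSm. apply Hg. rewrite Hfe. apply qle_refl. }
  exists nT. split. { split; [exact HTj | split; [exact HTm | split; assumption]]. }
  assert (geo : forall a, f (nablaS a) = nT (f a)).
  { intro a. unfold nT. rewrite gf. reflexivity. }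
  split. { split; [exact Hfj | split; [split; [exact Hfm | split; assumption] | exact geo]]. }
  intros a b. apply yon. intro y. unfold st_imp.
  split; intro H.
  - apply (proj1 (box_adj _ _ HTj HTm y _)). apply (proj1 (imp_adj _ _ _ _)).
    unfold nT. rewrite <- Hft. apply Hfm.
    apply (proj2 (imp_adj _ _ _ _)). apply (proj2 (box_adj _ _ HSj HSm _ _)).
    apply Hg. exact H.
  - apply Hg. apply (proj1 (box_adj _ _ HSj HSm _ _)). apply (proj1 (imp_adj _ _ _ _)).
    apply Hemb. rewrite Hft.
    exact (proj2 (imp_adj _ _ _ _) (proj2 (box_adj _ _ HTj HTm _ _) H)).
Qed.
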